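(* Consider an instance of the Nash equilibrium complementarity problem (NECP) that satisfies the dominance condition, and the instance of the tropical Nash equilibrium complementarity problem (TNECP) given by its logarithmic image ($M^-=\log(-M)$, $q^+=\log q$). The sequence of bases over which the Lemke--Howson algorithm iterates does not depend on whether it is applied to the classical instance or the tropical one. In particular, it returns a basis of a solution of the classical instance within at most $2n-1$ iterations.
   Context: NECP: given $n\times n$ real $M$ with nonpositive columns each having a negative entry and $q>0$, find $(w,z)$ with $w=Mz+q$, $w^\top z=0$, $z\neq 0$, $w,z\geq0$; written as $(I\ \ -M)\binom{w}{z}=q$ with columns indexed by $[n]\uplus[n]$ (blue copy for $w$, red for $z$). TNECP over max-plus $\mathbb{T}=\mathbb{R}\cup\{-\infty\}$: $w\oplus M^-\odot z=q^+$, $w^\top\odot z=-\infty$, $z\neq-\infty$. Classical bases are feasible bases of the linear system; tropical bases of $A\odot x=b$ are $B$ with $|B|=n$ and a bijection $\phi:[n]\to B$ such that $b_i-A_{i\phi(i)}\in\mathbb{T}$ is minimal among $b_k-A_{k\phi(i)}$. Dominance condition: the normalized matrix $(\operatorname{diag} q)^{-1}(I\ \ -M)(\operatorname{diag} u)^{-1}$ ($u_j$ = max entry of column $j$ of $(\operatorname{diag} q)^{-1}(I\ \ -M)$) satisfies (a) some $n\times n$ submatrix covers a permutation matrix and (b) every $n\times n$ submatrix covering a permutation matrix has all row sums less than $2$; under it both systems are nondegenerate. The Lemke--Howson algorithm, for fixed $j^\star\in[n]$, starts from basis $[n]\uplus\varnothing$ with entering element $(j^\star,\text{red})$, repeatedly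 pivots to the unique other basis in $B\cup\{\gamma\}$, takes as next entering element the twin (same label, other color) of the leaving element, and stops at a fully labeled basis (all labels $1,\dots,n$ appear). *)

(* Defs.v *)
From HB Require Import structures.
From mathcomp Require Import all_boot all_order all_algebra.
From mathcomp Require Import reals exp.
Set Implicit Arguments. Unset Strict Implicit. Unset Printing Implicit Defensive.
Import Order.TTheory GRing.Theory Num.Theory.
Local Open Scope ring_scope.

(* Columns of (I  -M) are indexed by [n] (+) [n]:
   inl i = blue copy (variable w_i), inr i = red copy (variable z_i). *)
Definition lhcol (n : nat) : finType := ('I_n + 'I_n)%type.

Definition label n (c : lhcol n) : 'I_n := match c with inl i => i | inr i => i end.
Definition twin n (c : lhcol n) : lhcol n := match c with inl i => inr i | inr i => inl i end.

Definition fully_labeled n (B : {set lhcol n}) : Prop :=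
  forall i : 'I_n, exists2 c, c \in B & label c = i.

Definition blue_basis n : {set lhcol n} := [set c : lhcol n | if c is inl _ then true else false].

Section Instances.
Variable R : realType.
Variable n : nat.

Definition necp_instance (M : 'M[R]_n) (q : 'I_n -> R) : Prop :=
  (forall i j, M i j <= 0) /\ (forall j, exists i, M i j < 0) /\ (forall i, 0 < q i).

Definition Acl (M : 'M[R]_n) (i : 'I_n) (c : lhcol n) : R :=
  match c with inl j => (i == j)%:R | inr j => - M i j end.

Definition Aapply (M : 'M[R]_n) (x : lhcol n -> R) (i : 'I_n) : R :=
  \sum_(c : lhcol n) Acl M i c * x c.

Definition supported (B : {set lhcol n}) (x : lhcol n -> R) : Prop :=
  forall c, c \notin B -> x c = 0.

Definition classical_basis (M : 'M[R]_n) (q : 'I_n -> R) (B : {set lhcol n}) : Prop :=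
  #|B| = n /\
  (forall x, supported B x -> (forall i, Aapply M x i = 0) -> forall c, x c = 0) /\
  (exists x, supported B x /\ (forall c, 0 <= x c) /\ (forall i, Aapply M x i = q i)).

(* Tropical semiring T = R u {-oo}, encoded as option R (None = -oo). *)
Definition tlog (x : R) : option R := if 0 < x then Some (ln x) else None.

(* tropical matrix of w (+) M^- (.) z = q^+ : (tropical identity | M^-),
   with M^- = log(-M) entrywise, and right-hand side q^+ = log q *)
Definition Atr (M : 'M[R]_n) (i : 'I_n) (c : lhcol n) : option R :=
  match c with inl j => if i == j then Some 0 else None | inr j => tlog (- M i j) end.

(* tropical bases of A (.) x = b: |B| = n and a bijection phi : [n] -> B such that
   b_i - A_{i phi(i)} is in T (i.e. finite) and minimal among the b_k - A_{k phi(i)}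
   (entries with A_{k phi(i)} = -oo give +oo, hence impose no constraint) *)
Definition tropical_basis (M : 'M[R]_n) (q : 'I_n -> R) (B : {set lhcol n}) : Prop :=
  #|B| = n /\
  exists phi : 'I_n -> lhcol n,
    injective phi /\ (forall i, phi i \in B) /\
    forall i, exists2 a, Atr M i (phi i) = Some a &
      forall k a', Atr M k (phi i) = Some a' -> ln (q i) - a <= ln (q k) - a'.

Definition Pnorm (M : 'M[R]_n) (q : 'I_n -> R) (i : 'I_n) (c : lhcol n) : R :=
  Acl M i c / q i.
Definition colmax (M : 'M[R]_n) (q : 'I_n -> R) (c : lhcol n) : R :=
  \big[Num.max/0]_(i < n) Pnorm M q i c.
Definition Nnorm (M : 'M[R]_n) (q : 'I_n -> R) (i : 'I_n) (c : lhcol n) : R :=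
  Pnorm M q i c / colmax M q c.

Definition covers_perm (N : 'I_n -> lhcol n -> R) (C : {set lhcol n}) : Prop :=
  exists psi : 'I_n -> lhcol n,
    injective psi /\ (forall i, psi i \in C) /\ (forall i, 1 <= N i (psi i)).

Definition dominance (M : 'M[R]_n) (q : 'I_n -> R) : Prop :=
  (exists C : {set lhcol n}, #|C| = n /\ covers_perm (Nnorm M q) C) /\
  (forall C : {set lhcol n}, #|C| = n -> covers_perm (Nnorm M q) C ->
     forall i, \sum_(c in C) Nnorm M q i c < 2).

End Instances.

Section LH.
Variable n : nat.
Variable isB : {set lhcol n} -> Prop.

Definition pivot (B : {set lhcol n}) (g : lhcol n) (B' : {set lhcol n}) : Prop :=
  isB B' /\ B' \subset g |: B /\ B' <> B /\
  (forall B'', isB B'' -> B'' \subset g |: B -> B'' = B \/ B'' = B').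

Fixpoint lh_from (g : lhcol n) (B : {set lhcol n}) (s : seq {set lhcol n}) : Prop :=
  match s with
  | [::] => False
  | B' :: s' =>
      pivot B g B' /\
      (if s' is [::] then fully_labeled B'
       else ~ fully_labeled B' /\
            exists2 l, l \in B :\: B' & lh_from (twin l) B' s')
  end.

(* the sequence s = [B_1; ...; B_m] of bases after the initial basis [n] (+) {},
   with first entering element (jstar, red); m = size s is the number of iterations *)
Definition lh_path (jstar : 'I_n) (s : seq {set lhcol n}) : Prop :=
  lh_from (inr jstar) (blue_basis n) s.

End LH.

(* Main.v *)
Require Import Defs.
From HB Require Import structures.
From mathcomp Require Import all_boot all_order all_algebra.
From mathcomp Require Import reals exp.
From mathcomp.algebra_tactics Require Import ring lra.
From mathcomp Require Import zify.
Import Order.TTheory GRing.Theory Num.Theory.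
Local Open Scope ring_scope.
Set Implicit Arguments. Unset Strict Implicit. Unset Printing Implicit Defensive.

Section Basic.
Variable R : realType.
Variable n : nat.
Variables (M : 'M[R]_n) (q : 'I_n -> R).
Hypothesis HN : necp_instance M q.

Local Notation P := (Pnorm M q).
Local Notation u := (colmax M q).
Local Notation N := (Nnorm M q).

Lemma q_gt0 i : 0 < q i.
Proof. by case: HN => _ [_]. Qed.

Lemma Acl_ge0 i c : 0 <= Acl M i c.
Proof. case: c => j /=; first by rewrite ler0n. by rewrite oppr_ge0; case: HN. Qed.

Lemma P_ge0 i c : 0 <= P i c.
Proof. by rewrite /Pnorm divr_ge0 ?Acl_ge0 // ltW ?q_gt0. Qed.

Lemma le_P_u i c : P i c <= u c.
Proof. exact: (le_bigmax _ (fun i => P i c)). Qed.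

Lemma u_gt0 c : 0 < u c.
Proof.
have [i Hi] : exists i, 0 < P i c.
  case: c => j.
    exists j; by rewrite /Pnorm /= eqxx divr_gt0 ?q_gt0.
  case: HN => _ [/(_ j) [i Hi] _]; exists i.
  by rewrite /Pnorm /= divr_gt0 ?q_gt0 // oppr_gt0.
exact: lt_le_trans Hi (le_P_u i c).
Qed.

Lemma N_ge0 i c : 0 <= N i c.
Proof. by rewrite /Nnorm divr_ge0 ?P_ge0 // ltW ?u_gt0. Qed.

Lemma N_le1 i c : N i c <= 1.
Proof. by rewrite /Nnorm ler_pdivrMr ?u_gt0 // mul1r le_P_u. Qed.

Lemma amE i c : (1 <= N i c) = (u c <= P i c).
Proof. by rewrite /Nnorm ler_pdivlMr ?u_gt0 // mul1r. Qed.

Lemma am_eq1 i c : 1 <= N i c -> N i c = 1.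
Proof. by move=> h; apply/le_anti; rewrite h N_le1. Qed.

Lemma am_exists c : exists i, 1 <= N i c.
Proof.
have i0 : 'I_n by case: c.
exists [arg max_(i > i0) P i c]%O.
rewrite amE /colmax (bigmax_eq_arg _ i0) //.
by move=> i _; apply: P_ge0.
Qed.

Lemma am_all i c : (1 <= N i c) <-> forall k, P k c <= P i c.
Proof.
rewrite amE; split => [h k|h].
  exact: le_trans (le_P_u k c) h.
by apply/bigmax_leP; split => [|k _]; [apply: P_ge0|apply: h].
Qed.

Lemma am_inl j : 1 <= N j (inl j).
Proof.
apply/am_all => k; rewrite /Pnorm /= eqxx.
case: eqP => [->|_]; first by [].
by rewrite mul0r divr_ge0 ?ler01 // ltW ?q_gt0.
Qed.

Lemma N_inl i j : i != j -> N i (inl j) = 0.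
Proof. by move=> /negbTE h; rewrite /Nnorm /Pnorm /= h !mul0r. Qed.

Lemma am_inl_eq i j : 1 <= N i (inl j) -> i = j.
Proof. by case: (eqVneq i j) => // /N_inl ->; rewrite ler10. Qed.


Lemma sum2_le (I : finType) (F : I -> R) a b : a != b -> (forall k, 0 <= F k) ->
  F a + F b <= \sum_k F k.
Proof.
move=> ab F0; rewrite (bigD1 a) //= (bigD1 b) /=; last by rewrite eq_sym.
by rewrite lerD2l lerDl sumr_ge0.
Qed.

Hypothesis HD : dominance M q.

Lemma dom_sum (C : {set lhcol n}) : #|C| = n -> covers_perm N C ->
  forall i, \sum_(c in C) N i c < 2.
Proof. by case: HD => _; apply. Qed.

Lemma am_uniq i i' c : 1 <= N i c -> 1 <= N i' c -> i = i'.
Proof.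
case: c => j; first by move=> /am_inl_eq -> /am_inl_eq ->.
move=> hi hi'; apply/eqP/negPn/negP => ne.
pose psi k := if k == i then inr j else @inl 'I_n 'I_n k.
have psi_inj : injective psi.
  move=> k1 k2; rewrite /psi; case: eqP => [->|/eqP n1]; case: eqP => [->|/eqP n2] //.
  by case.
have cov : covers_perm N (psi @: setT).
  exists psi; split => //; split => k; first by apply: imset_f; rewrite in_setT.
  by rewrite /psi; case: eqP => [->|_] //; apply: am_inl.
have cardC : #|psi @: setT| = n by rewrite card_imset // cardsT card_ord.
have := dom_sum cardC cov i'.
rewrite big_imset /=; last by move=> ? ? _ _; apply: psi_inj.
have -> : \sum_(k in [set: 'I_n]) N i' (psi k) = \sum_k N i' (psi k).
  by apply: eq_bigl => k; rewrite in_setT.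
apply/negP; rewrite -leNgt.
apply: le_trans (@sum2_le _ (fun k => N i' (psi k)) i i' ne _); last by move=> k; apply: N_ge0.
have ne' : i' != i by rewrite eq_sym.
rewrite /psi eqxx (negbTE ne').
by rewrite (am_eq1 hi') (am_eq1 (am_inl _)).
Qed.

Definition sig (c : lhcol n) : 'I_n :=
  match c with inl j => j | inr j => odflt j [pick i | 1 <= N i (inr j)] end.

Lemma am_sig c : 1 <= N (sig c) c.
Proof.
case: c => j /=; first exact: am_inl.
case: (pickP (fun i => 1 <= N i (inr j))) => [i //|H] /=.
by case: (am_exists (inr j)) => i; rewrite H.
Qed.

Lemma sigE i c : 1 <= N i c -> sig c = i.
Proof. by move=> h; apply: am_uniq (am_sig c) h. Qed.

Lemma sig_inl j : sig (inl j) = j.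
Proof. by []. Qed.

Definition good (B : {set lhcol n}) := #|B| = n /\ {in B &, injective sig}.

Lemma good_cover (B : {set lhcol n}) : good B -> forall i, exists2 c, c \in B & sig c = i.
Proof.
move=> [cB inj] i.
have E : sig @: B = setT.
  apply/eqP; rewrite eqEcard subsetT /= cardsT card_ord.
  by have /imset_injP/eqP -> := inj; rewrite cB.
have : i \in sig @: B by rewrite E in_setT.
by move=> /imsetP[c cB' ->]; exists c.
Qed.

Lemma good_psi (B : {set lhcol n}) : good B -> exists psi : 'I_n -> lhcol n,
  [/\ injective psi, forall i, psi i \in B, forall i, sig (psi i) = i & B = psi @: setT].
Proof.
move=> gB; have [cB inj] := gB.
pose psi i := odflt (inl i) [pick c in B | sig c == i].
have Hpsi i : psi i \in B /\ sig (psi i) = i.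
  rewrite /psi; case: pickP => [c /andP[-> /eqP ->] //|H] /=.
  by case: (good_cover gB i) => c cin ci; move: (H c); rewrite cin ci eqxx.
have pinj : injective psi.
  by move=> i1 i2 e; rewrite -(Hpsi i1).2 -(Hpsi i2).2 e.
exists psi; split => // [i|i|]; first by case: (Hpsi i).
  by case: (Hpsi i).
apply/eqP; rewrite eq_sym eqEcard card_imset // cardsT card_ord cB leqnn andbT.
by apply/subsetP => c /imsetP[i _ ->]; case: (Hpsi i).
Qed.

Lemma good_covers (B : {set lhcol n}) : good B -> covers_perm N B.
Proof.
move=> /good_psi[psi [inj inB sg _]]; exists psi; split => //; split => // i.
by rewrite -{1}(sg i) am_sig.
Qed.

Lemma covers_good (B : {set lhcol n}) : #|B| = n -> covers_perm N B -> good B.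
Proof.
move=> cB [psi [inj [inB am]]]; split => //.
have BE : B = psi @: setT.
  apply/eqP; rewrite eq_sym eqEcard card_imset // cardsT card_ord cB leqnn andbT.
  by apply/subsetP => c /imsetP[i _ ->].
have sg i : sig (psi i) = i by apply: sigE.
move=> c1 c2; rewrite BE => /imsetP[i1 _ ->] /imsetP[i2 _ ->].
by rewrite !sg => ->.
Qed.

Lemma good_sum (B : {set lhcol n}) : good B -> forall i, \sum_(c in B) N i c < 2.
Proof. by move=> gB; apply: dom_sum; [case: gB|apply: good_covers]. Qed.

Lemma Atr_tlog i c : Atr M i c = tlog (Acl M i c).
Proof.
case: c => j //=; rewrite /tlog; case: eqP => _; first by rewrite ltr01 ln1.
by rewrite ltxx.
Qed.

Lemma P_pos i c : 0 < Acl M i c -> P i c \is Num.pos.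
Proof. by move=> h; rewrite posrE /Pnorm divr_gt0 ?q_gt0. Qed.

Lemma ln_P i c : 0 < Acl M i c -> ln (P i c) = ln (Acl M i c) - ln (q i).
Proof.
move=> h; rewrite /Pnorm ln_div //; rewrite posrE //; exact: q_gt0.
Qed.

Lemma trop_am i c : (exists2 a, Atr M i c = Some a &
    forall k a', Atr M k c = Some a' -> ln (q i) - a <= ln (q k) - a') <->
  1 <= N i c.
Proof.
rewrite am_all; split.
  move=> [a]; rewrite Atr_tlog /tlog; case: ifP => // hpos [<-] h k.
  have := h k; rewrite Atr_tlog /tlog; case: ifP => [kpos|kneg] hk.
    have := hk _ erefl.
    rewrite -(ler_ln (P_pos kpos) (P_pos hpos)) !ln_P //.
    move=> hh; lra.
  have : Acl M k c = 0 by apply/eqP; rewrite eq_le Acl_ge0 leNgt kneg.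
  by rewrite /Pnorm => ->; rewrite mul0r; apply: P_ge0.
move=> h.
have hpos : 0 < Acl M i c.
  have hu : u c <= P i c by rewrite -amE; apply/am_all.
  have := lt_le_trans (u_gt0 c) hu.
  by rewrite /Pnorm pmulr_lgt0 // invr_gt0 q_gt0.
exists (ln (Acl M i c)); first by rewrite Atr_tlog /tlog hpos.
move=> k a'; rewrite Atr_tlog /tlog; case: ifP => // kpos [<-].
have := h k; rewrite -(ler_ln (P_pos kpos) (P_pos hpos)) !ln_P // => hh; lra.
Qed.

Lemma trop_good (B : {set lhcol n}) : tropical_basis M q B <-> good B.
Proof.
split.
  move=> [cB [phi [inj [inB H]]]]; apply: covers_good => //.
  by exists phi; split => //; split => // i; apply/trop_am.
move=> gB; split; first by case: gB.
have [psi [inj [inB H]]] := good_covers gB.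
by exists psi; split => //; split => // i; apply/trop_am.
Qed.

Lemma Nrow (x : lhcol n -> R) i :
  \sum_c N i c * (u c * x c) = Aapply M x i / q i.
Proof.
rewrite /Aapply mulr_suml; apply: eq_bigr => c _.
have := u_gt0 c; have := q_gt0 i; rewrite /Nnorm /Pnorm => hq hu.
by field; rewrite !gt_eqF.
Qed.


Lemma class_good (B : {set lhcol n}) : classical_basis M q B -> good B.
Proof.
move=> [cB [_ [x [sx [x0 Ax]]]]].
pose y c := u c * x c.
have y0 c : 0 <= y c := mulr_ge0 (ltW (u_gt0 c)) (x0 c).
have yB c : c \notin B -> y c = 0 by move=> /sx xc; rewrite /y xc mulr0.
have row i : \sum_c N i c * y c = 1 by rewrite Nrow Ax divff // gt_eqF ?q_gt0.
have Ybound r : \sum_(c | sig c == r) y c <= 1.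
  rewrite -(row r) [X in _ <= X](bigID (fun c => sig c == r)) /= -[X in X <= _]addr0.
  apply: lerD; last by apply: sumr_ge0 => c _; apply: mulr_ge0 (N_ge0 _ _) (y0 c).
  by apply: ler_sum => c /eqP <-; rewrite (am_eq1 (am_sig c)) mul1r.
have cover i0 : exists2 c, c \in B & sig c = i0.
  case: (boolP [exists c in B, sig c == i0]) => [/exists_inP[c ? /eqP ?]|]; first by exists c.
  move/exists_inPn => H0; exfalso.
  pose f r := if [pick c in B | sig c == r] is Some c0 then
     [arg max_(c > c0 | (c \in B) && (sig c == r)) N i0 c]%O else inl r.
  have f_sig r : sig (f r) = r.
    rewrite /f; case: (pickP (fun c => (c \in B) && (sig c == r))) => [c0 hc0|_] //.
    by case: arg_maxP => // c /andP[_ /eqP].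
  have f_max c : c \in B -> N i0 c <= N i0 (f (sig c)).
    move=> cB'; rewrite /f; case: (pickP (fun c' => (c' \in B) && (sig c' == sig c))) => [c0 hc0|H].
      by case: arg_maxP => // c' _; apply; rewrite cB' eqxx.
    by move: (H c); rewrite cB' eqxx.
  have f_inj : injective f by move=> r1 r2 e; rewrite -(f_sig r1) e f_sig.
  have f_i0 : f i0 = inl i0.
    rewrite /f; case: (pickP (fun c => (c \in B) && (sig c == i0))) => [c0 /andP[c0B e]|//].
    by move: (H0 c0 c0B); rewrite e.
  have cardC : #|f @: setT| = n by rewrite card_imset // cardsT card_ord.
  have cov : covers_perm N (f @: setT).
    exists f; split => //; split => k; first by apply: imset_f; rewrite in_setT.
    by rewrite -{1}(f_sig k) am_sig.
  have := dom_sum cardC cov i0.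
  rewrite big_imset /=; last by move=> ? ? _ _; apply: f_inj.
  have -> : \sum_(k in [set: 'I_n]) N i0 (f k) = \sum_k N i0 (f k).
    by apply: eq_bigl => k; rewrite in_setT.
  rewrite (bigD1 i0) //= f_i0 (am_eq1 (am_inl i0)).
  have Y0 : \sum_(c | sig c == i0) y c = 0.
    apply: big1 => c /eqP e; apply: yB; apply/negP => cB'.
    by move: (H0 c cB'); rewrite e eqxx.
  have h1 : 1 <= \sum_(r | r != i0) N i0 (f r).
    rewrite -(row i0).
    apply: le_trans (_ : \sum_c N i0 (f (sig c)) * y c <= _).
      apply: ler_sum => c _; case: (boolP (c \in B)) => cB'.
        exact: (ler_wpM2r (y0 c) (f_max c cB')).
      by rewrite yB // !mulr0.
    rewrite (partition_big sig predT) //= (bigD1 i0) //=.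
    have -> : \sum_(i | true && (sig i == i0)) N i0 (f (sig i)) * y i = 0.
      apply: big1 => c /eqP e; rewrite yB ?mulr0 //; apply/negP => cB'.
      by move: (H0 c cB'); rewrite e eqxx.
    rewrite add0r; apply: ler_sum => r _.
    have -> : \sum_(i | true && (sig i == r)) N i0 (f (sig i)) * y i =
              N i0 (f r) * \sum_(c | sig c == r) y c.
      by rewrite mulr_sumr; apply: eq_bigr => c /eqP ->.
    by rewrite -[X in _ <= X]mulr1; exact: (ler_wpM2l (N_ge0 _ _) (Ybound r)).
  move=> h2.
  have h3 : (2:R) <= 1 + \sum_(i < n | i != i0) N i0 (f i).
    apply: le_trans (_ : 1 + 1 <= _); first lra.
    by rewrite lerD2l; exact: h1.
  by move: (lt_le_trans h2 h3); rewrite ltxx.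
split => //.
have E : sig @: B = setT.
  apply/eqP; rewrite eqEsubset subsetT /=.
  apply/subsetP => i _; have [c cin <-] := cover i; exact: imset_f.
by apply/imset_injP; rewrite E cardsT card_ord cB.
Qed.


Lemma sum_B (B : {set lhcol n}) (F : lhcol n -> R) :
  (forall c, c \notin B -> F c = 0) -> \sum_c F c = \sum_(c in B) F c.
Proof.
move=> h; rewrite [RHS]big_mkcond; apply: eq_bigr => c _.
by case: ifP => // /negbT /h.
Qed.

Lemma row_split (B : {set lhcol n}) c0 (z : lhcol n -> R) : c0 \in B ->
  \sum_(c in B) N (sig c0) c * z c = z c0 + \sum_(c in B | c != c0) N (sig c0) c * z c.
Proof. by move=> h; rewrite (bigD1 c0) //= (am_eq1 (am_sig c0)) mul1r. Qed.

Lemma r_lt1 (B : {set lhcol n}) c0 : good B -> c0 \in B ->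
  \sum_(c in B | c != c0) N (sig c0) c < 1.
Proof.
move=> gB h; have := good_sum gB (sig c0).
rewrite (bigD1 c0) //= (am_eq1 (am_sig c0)).
generalize (\sum_(i in B | i != c0) N (sig c0) i) => S; lra.
Qed.

Lemma good_uniq (B : {set lhcol n}) x : good B -> supported B x ->
  (forall i, Aapply M x i = 0) -> forall c, x c = 0.
Proof.
move=> gB sx Ax c'; apply/eqP/negPn/negP => xn0.
pose y c := u c * x c.
have yB c : c \notin B -> y c = 0 by move=> /sx xc; rewrite /y xc mulr0.
have row i : \sum_(c in B) N i c * y c = 0.
  rewrite -sum_B; first by rewrite Nrow Ax mul0r.
  by move=> c /yB ->; rewrite mulr0.
have c'B : c' \in B.
  by case: (boolP (c' \in B)) => // /sx h; move: xn0; rewrite h eqxx.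
have yc' : 0 < `|y c'| by rewrite normr_gt0 mulf_neq0 // gt_eqF ?u_gt0.
case: (@arg_maxP _ _ _ c' (mem B) (fun c => `|y c|) c'B) => c0 c0B Hmax.
have := row (sig c0); rewrite row_split //.
have := r_lt1 gB c0B.
have : `|\sum_(c in B | c != c0) N (sig c0) c * y c| <=
        (\sum_(c in B | c != c0) N (sig c0) c) * `|y c0|.
  apply: le_trans (ler_norm_sum _ _ _) _; rewrite mulr_suml.
  apply: ler_sum => c /andP[cB _]; rewrite normrM ger0_norm ?N_ge0 //.
  exact: (ler_wpM2l (N_ge0 _ _) (Hmax c cB)).
have := Hmax c' c'B.
generalize (\sum_(c in B | c != c0) N (sig c0) c * y c) (\sum_(c in B | c != c0) N (sig c0) c) => S r.
move=> h1 h2 h3 h4.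
have e : S = - y c0 by lra.
rewrite e normrN in h2.
have pos : 0 < `|y c0| := lt_le_trans yc' h1.
have : r * `|y c0| < `|y c0| by rewrite gtr_pMl.
by move=> /(le_lt_trans h2); rewrite ltxx.
Qed.


Lemma good_exists (B : {set lhcol n}) : good B ->
  exists x, supported B x /\ forall i, Aapply M x i = q i.
Proof.
move=> gB; have [psi [pinj inB sg BE]] := good_psi gB.
pose AT : 'M[R]_n := \matrix_(j, i) Acl M i (psi j).
pose xof (w : 'rV[R]_n) c := if c \in B then w 0 (sig c) else 0.
have sxof w : supported B (xof w) by move=> c /negbTE h; rewrite /xof h.
have Axof w i : Aapply M (xof w) i = (w *m AT) 0 i.
  rewrite /Aapply (sum_B (B := B)); last by move=> c /negbTE h; rewrite /xof h mulr0.
  have -> : \sum_(c in B) Acl M i c * xof w c = \sum_(c in B) Acl M i c * w 0 (sig c).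
    by apply: eq_bigr => c cB; rewrite /xof cB.
  rewrite BE big_imset /=; last by move=> ? ? _ _; apply: pinj.
  rewrite mxE; under eq_bigl do rewrite in_setT.
  by apply: eq_bigr => j _; rewrite sg mxE mulrC.
have unitAT : AT \in unitmx.
  rewrite unitmxE unitfE; apply/negP => /det0P [v vn0 v0].
  have A0 i : Aapply M (xof v) i = 0 by rewrite Axof v0 mxE.
  have h := good_uniq gB (sxof v) A0.
  move/eqP: vn0; apply; apply/rowP => j; rewrite mxE.
  by have := h (psi j); rewrite /xof inB sg.
pose w := (\row_i q i) *m invmx AT.
exists (xof w); split => // i.
by rewrite Axof /w -mulmxA mulVmx // mulmx1 mxE.
Qed.


Lemma good_nonneg (B : {set lhcol n}) x : good B -> supported B x ->
  (forall i, Aapply M x i = q i) -> forall c, 0 <= x c.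
Proof.
move=> gB sx Ax c'; rewrite leNgt; apply/negP => xneg.
pose y c := u c * x c.
have yB c : c \notin B -> y c = 0 by move=> /sx xc; rewrite /y xc mulr0.
have row i : \sum_(c in B) N i c * y c = 1.
  rewrite -sum_B; first by rewrite Nrow Ax divff // gt_eqF ?q_gt0.
  by move=> c /yB ->; rewrite mulr0.
have c'B : c' \in B.
  by case: (boolP (c' \in B)) => // /sx h; move: xneg; rewrite h ltxx.
have yc' : y c' < 0 by rewrite /y pmulr_rlt0 ?u_gt0.
case: (@arg_minP _ _ _ c' (mem B) y c'B) => c1 c1B Hmin.
case: (@arg_maxP _ _ _ c' (mem B) y c'B) => c2 c2B Hmax.
have := row (sig c1); rewrite row_split //.
have := row (sig c2); rewrite row_split //.
have := r_lt1 gB c1B; have := r_lt1 gB c2B.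
have : \sum_(c in B | c != c1) N (sig c1) c * y c <=
        (\sum_(c in B | c != c1) N (sig c1) c) * y c2.
  rewrite mulr_suml; apply: ler_sum => c /andP[cB _].
  exact: (ler_wpM2l (N_ge0 _ _) (Hmax c cB)).
have : (\sum_(c in B | c != c2) N (sig c2) c) * y c1 <=
        \sum_(c in B | c != c2) N (sig c2) c * y c.
  rewrite mulr_suml; apply: ler_sum => c /andP[cB _].
  exact: (ler_wpM2l (N_ge0 _ _) (Hmin c cB)).
have r1p : 0 <= \sum_(c in B | c != c1) N (sig c1) c by apply: sumr_ge0 => c _; apply: N_ge0.
have r2p : 0 <= \sum_(c in B | c != c2) N (sig c2) c by apply: sumr_ge0 => c _; apply: N_ge0.
have m0 : y c1 < 0 := le_lt_trans (Hmin c' c'B) yc'.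
move: r1p r2p m0.
generalize (\sum_(c in B | c != c1) N (sig c1) c * y c) (\sum_(c in B | c != c2) N (sig c2) c * y c)
  (\sum_(c in B | c != c1) N (sig c1) c) (\sum_(c in B | c != c2) N (sig c2) c) (y c1) (y c2).
move=> S1 S2 r1 r2 m Mx r1p r2p m0 h1 h2 h3 h4 h5 h6.
have k0 : Mx <= 1 - r2 * m by lra.
have k1 : r1 * Mx <= r1 * (1 - r2 * m) by exact: (ler_wpM2l r1p k0).
have k2 : r1 * r2 < 1.
  have : r1 * r2 <= r1 * 1 by apply: (ler_wpM2l r1p); lra.
  lra.
have k3 : m * (1 - r1 * r2) < 0 by rewrite pmulr_llt0 // subr_gt0.
have : 0 < 0 :> R by nra.
by rewrite ltxx.
Qed.


Lemma class_iff (B : {set lhcol n}) : classical_basis M q B <-> good B.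
Proof.
split; first exact: class_good.
move=> gB; split; first by case: gB.
split; first by move=> x sx Ax; exact: (good_uniq gB sx Ax).
have [x [sx Ax]] := good_exists gB.
by exists x; split => //; split => //; exact: (good_nonneg gB sx Ax).
Qed.

End Basic.

Section Comb.
Variable n : nat.
Variable sg : lhcol n -> 'I_n.
Hypothesis sg_inl : forall j, sg (inl j) = j.
Variable j0 : 'I_n.

Definition goodc (B : {set lhcol n}) := #|B| = n /\ {in B &, injective sg}.

Lemma eq_ll (a b : 'I_n) : (inl a == inl b :> lhcol n) = (a == b). Proof. by []. Qed.
Lemma eq_rr (a b : 'I_n) : (inr a == inr b :> lhcol n) = (a == b). Proof. by []. Qed.
Lemma eq_lr (a b : 'I_n) : (inl a == inr b :> lhcol n) = false. Proof. by []. Qed.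
Lemma eq_rl (a b : 'I_n) : (inr a == inl b :> lhcol n) = false. Proof. by []. Qed.

Lemma goodc_cover (B : {set lhcol n}) : goodc B -> forall i, exists2 c, c \in B & sg c = i.
Proof.
move=> [cB inj] i.
have E : sg @: B = setT.
  apply/eqP; rewrite eqEcard subsetT /= cardsT card_ord.
  by have /imset_injP/eqP -> := inj; rewrite cB.
have : i \in sg @: B by rewrite E in_setT.
by move=> /imsetP[c cB' ->]; exists c.
Qed.

Lemma inB' (B : {set lhcol n}) g c e :
  (e \in g |: (B :\ c)) = (e == g) || ((e != c) && (e \in B)).
Proof. by rewrite in_setU1 in_setD1. Qed.

Lemma pivot_good (B : {set lhcol n}) g c : goodc B -> g \notin B -> c \in B -> sg c = sg g ->
  pivot goodc B g (g |: (B :\ c)).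
Proof.
move=> [cB inj] gB cin e.
have gc : g != c by apply: contraNneq gB => ->.
have card' : #|g |: (B :\ c)| = n.
  by move: (cB); rewrite (cardsD1 c B) cin cardsU1 in_setD1 (negbTE gB) andbF => h; exact: h.
have good' : goodc (g |: (B :\ c)).
  split => // x y; rewrite !inB'.
  move=> /orP[/eqP->|/andP[xc xB]] /orP[/eqP->|/andP[yc yB]] // e1.
  - by move: yc; rewrite -(inj c y) ?eqxx // e.
  - by move: xc; rewrite -(inj c x) ?eqxx // e.
  - exact: inj.
split => //; split.
  by apply/subsetP => x; rewrite inB' in_setU1 => /orP[->//|/andP[_ ->]]; rewrite orbT.
split.
  by move=> E; move: gB; rewrite -E in_setU1 eqxx.
move=> B'' [cB'' inj''] sub.
case: (boolP (g \in B'')) => gB''.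
  right; apply/eqP; rewrite eqEcard card' cB'' leqnn andbT.
  apply/subsetP => x xB''; rewrite inB'.
  move/subsetP: sub => /(_ x xB''); rewrite in_setU1 => /orP[->//|xB].
  case: (boolP (x == c)) => [/eqP xc|xc]; last by rewrite xB orbT.
  by move: gc; rewrite -xc (inj'' g x) ?eqxx // -e xc.
left; apply/eqP; rewrite eqEcard cB cB'' leqnn andbT.
apply/subsetP => x xB''.
move/subsetP: sub => /(_ x xB''); rewrite in_setU1 => /orP[/eqP xg|//].
by move: gB''; rewrite -xg xB''.
Qed.


Definition tau (j : 'I_n) := sg (inr j).
Definition rr t := iter t tau j0.
Definition rs m := [seq rr t | t <- iota 0 m].

Lemma rsS m : rs m.+1 = rcons (rs m) (rr m).
Proof. by rewrite /rs -addn1 iotaD map_cat /= add0n cats1. Qed.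

Lemma rsP l m : reflect (exists2 t, (t < m)%N & l = rr t) (l \in rs m).
Proof.
apply: (iffP mapP) => [[t]|[t ht ->]]; last by exists t; rewrite // mem_iota.
by rewrite mem_iota /= add0n => ht ->; exists t.
Qed.

Lemma rr_inj m a b : uniq (rs m) -> (a < m)%N -> (b < m)%N -> rr a = rr b -> a = b.
Proof.
move=> u ha hb e; apply/eqP.
rewrite -(nth_uniq j0 _ _ u) ?size_map ?size_iota //.
by rewrite !(nth_map 0%N) ?size_iota // !nth_iota // !add0n e.
Qed.

Lemma rs_size_le m : uniq (rs m) -> (m <= n)%N.
Proof.
move=> u; have h := max_card (mem (rs m)).
by rewrite (card_uniqP u) size_map size_iota card_ord in h.
Qed.

Lemma card_rs m : uniq (rs m) -> #|[set l | l \in rs m]| = m.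
Proof. by move=> u; rewrite cardsE (card_uniqP u) size_map size_iota. Qed.

Definition redc (B : {set lhcol n}) := #|[set l | inr l \in B]|.

Record AC (B : {set lhcol n}) (g : lhcol n) : Prop := ACi {
  ac_good : goodc B;
  ac_lab : label g != j0;
  ac_nl : inl (label g) \notin B;
  ac_nr : inr (label g) \notin B;
  ac_l0 : inl j0 \in B;
  ac_r0 : inr j0 \in B;
  ac_one : forall l, l != label g -> l != j0 -> (inl l \in B) != (inr l \in B) }.

Definition Fwd (B : {set lhcol n}) j := exists m,
  [/\ j = rr m, uniq (rs m.+1) & forall l, (inr l \in B) = (l \in rs m)].
Definition Bwd (B : {set lhcol n}) := exists D : {set 'I_n},
  [/\ D != set0, j0 \notin D & forall d, d \in D -> (inr d \in B) && (tau d \in D)].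
Definition Inv (B : {set lhcol n}) (g : lhcol n) := AC B g /\ (if g is inr j then Fwd B j else Bwd B).
Definition mu (B : {set lhcol n}) (g : lhcol n) :=
  if g is inr _ then (2 * n - 2 - redc B)%N else (redc B).-1.
Definition Fin (B : {set lhcol n}) := [/\ fully_labeled B, goodc B & exists l, inr l \in B].

Lemma red_fwd (B : {set lhcol n}) m : uniq (rs m.+1) -> (forall l, (inr l \in B) = (l \in rs m)) -> redc B = m.
Proof.
move=> u h; rewrite /redc.
have -> : [set l | inr l \in B] = [set l | l \in rs m] by apply/setP => l; rewrite !inE h.
by apply: card_rs; move: u; rewrite rsS rcons_uniq => /andP[].
Qed.

Lemma notin_g (B : {set lhcol n}) g : AC B g -> g \notin B.
Proof. by case: g => j [] /=. Qed.

Lemma lab_mem (B : {set lhcol n}) l :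
  (exists2 e, e \in B & label e = l) <-> (inl l \in B) || (inr l \in B).
Proof.
split => [[[j|j] eB /= <-]|/orP[h|h]]; first by rewrite eB.
- by rewrite eB orbT.
- by exists (inl l).
- by exists (inr l).
Qed.

Lemma neq_lab (e e' : lhcol n) : label e != label e' -> e != e'.
Proof. by apply: contra => /eqP ->. Qed.

Lemma lab_twin (c : lhcol n) : label (twin c) = label c.
Proof. by case: c. Qed.


Lemma ac_fin (B : {set lhcol n}) g c : AC B g -> c \in B -> label c = j0 ->
  fully_labeled (g |: (B :\ c)).
Proof.
move=> ac cB lc i; apply/lab_mem; rewrite !inB'.
have nc e : label e != j0 -> e != c.
  by move=> h; apply/eqP => ec; move: h; rewrite ec lc eqxx.
case: (eqVneq i (label g)) => [->|ig].
  by case: (g) => j /=; rewrite eqxx ?orbT.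
case: (eqVneq i j0) => [->|ij0].
  case: (c) cB lc => j cB /= ej; subst j.
    by rewrite (ac_r0 ac) !orbT.
  by rewrite (ac_l0 ac) ?orbT /=; rewrite ?orbT.
have := ac_one ac ig ij0.
case: (boolP (inl i \in B)) => hl; case: (boolP (inr i \in B)) => hr //= _.
  by rewrite (nc (inl i)) ?orbT.
by rewrite (nc (inr i)) ?orbT.
Qed.

Lemma ac_cont (B : {set lhcol n}) g c : AC B g -> c \in B -> sg c = sg g -> label c != j0 ->
  ~ fully_labeled (g |: (B :\ c)) /\ AC (g |: (B :\ c)) (twin c).
Proof.
move=> ac cB e lc.
have gB := notin_g ac.
have lcg : label c != label g.
  apply/eqP => ej; case: (c) cB ej => j cB /= ej.
    by move: (ac_nl ac); rewrite -ej cB.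
  by move: (ac_nr ac); rewrite -ej cB.
have tc : twin c \notin B.
  move: (ac_one ac lcg lc); case: (c) cB => j /= ->; [by case: (inr j \in B) | by case: (inl j \in B)].
have piv := pivot_good (ac_good ac) gB cB e.
have inl_c : (inl (label c) \in g |: (B :\ c)) = false.
  rewrite inB' (negbTE (neq_lab (e := inl (label c)) (e' := g) lcg)) /=.
  case: (c) tc => j /= h; first by rewrite eqxx.
  by rewrite (negbTE h).
have inr_c : (inr (label c) \in g |: (B :\ c)) = false.
  rewrite inB' (negbTE (neq_lab (e := inr (label c)) (e' := g) lcg)) /=.
  case: (c) tc => j /= h; last by rewrite eqxx.
  by rewrite (negbTE h).
split.
  by move=> /(_ (label c)) /lab_mem; rewrite inl_c inr_c.
have lc' : j0 != label c by rewrite eq_sym.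
constructor.
- by case: piv.
- by rewrite lab_twin.
- by rewrite lab_twin inl_c.
- by rewrite lab_twin inr_c.
- by rewrite inB' (neq_lab (e := inl j0) (e' := c) lc') (ac_l0 ac) orbT.
- by rewrite inB' (neq_lab (e := inr j0) (e' := c) lc') (ac_r0 ac) orbT.
move=> l; rewrite lab_twin => lnc lnj; rewrite !inB'.
rewrite (neq_lab (e := inl l) (e' := c) lnc) (neq_lab (e := inr l) (e' := c) lnc) /=.
case: (eqVneq l (label g)) => [->|lng].
  case: (g) (ac_nl ac) (ac_nr ac) => j /= hl hr; rewrite eqxx /=.
    by rewrite (negbTE hr).
  by rewrite (negbTE hl).
rewrite (negbTE (neq_lab (e := inl l) (e' := g) lng)).
rewrite (negbTE (neq_lab (e := inr l) (e' := g) lng)) /=.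
exact: (ac_one ac lng lnj).
Qed.


Lemma step (B : {set lhcol n}) g : Inv B g -> exists2 c, c \in B :\: (g |: (B :\ c)) &
  pivot goodc B g (g |: (B :\ c)) /\
  (Fin (g |: (B :\ c)) \/
   [/\ ~ fully_labeled (g |: (B :\ c)), Inv (g |: (B :\ c)) (twin c) &
       (mu (g |: (B :\ c)) (twin c) < mu B g)%N]).
Proof.
move=> [ac ph]; have gB := notin_g ac.
have [c cB e] := goodc_cover (ac_good ac) (sg g).
have piv := pivot_good (ac_good ac) gB cB e.
have gc : g != c by apply: contraNneq gB => ->.
exists c; first by rewrite in_setD cB andbT inB' negb_or eqxx /= eq_sym gc.
split => //.
case: (eqVneq (label c) j0) => lc.
  left; split; [exact: ac_fin | by case: piv |].
  case: (g) ac ph gB e gc piv => j ac ph gB e gc piv; last by exists j; rewrite inB' eqxx.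
  case: ph => D [Dn0 j0D HD].
  case/set0Pn: Dn0 => d dD; exists d.
  have /andP[hd _] := HD d dD.
  rewrite inB' (neq_lab (e := inr d) (e' := c)) ?hd ?orbT //.
  by rewrite lc; apply: contraNneq j0D => <-.
right; have [nf ac'] := ac_cont ac cB e lc.
case: (g) ac ph gB e gc piv nf ac' => j ac ph gB e gc piv nf ac'.
-
  case: ph => D [Dn0 j0D HD].
  case: (c) cB e lc piv nf ac' gc => l cB e lc piv nf ac' gc.
    rewrite !sg_inl in e; subst l.
    by move: (ac_nl ac); rewrite /= cB.
  have tl : tau l = j by rewrite /tau e sg_inl.
  have lD : l \notin D.
    apply/negP => lD; have /andP[_] := HD l lD; rewrite tl => jD.
    by have /andP[jB _] := HD j jD; move: (ac_nr ac); rewrite /= jB.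
  have redE : [set l' | inr l' \in inl j |: (B :\ inr l)] = [set l' | inr l' \in B] :\ l.
    by apply/setP => l'; rewrite !inE eq_rl eq_rr.
  have red1 : redc B = (redc (inl j |: (B :\ inr l))).+1.
    by rewrite /redc redE (cardsD1 l [set l' | inr l' \in B]) inE cB.
  have red0 : (0 < redc (inl j |: (B :\ inr l)))%N.
    by rewrite /redc card_gt0; apply/set0Pn; exists j0; rewrite inE (ac_r0 ac').
  split => //; last by rewrite /mu red1 /= ltn_predL.
  split => //; exists D; split => // d dD.
  have /andP[hd ->] := HD d dD.
  have dl : d != l by apply: contraNneq lD => <-.
  by rewrite andbT inB' eq_rl eq_rr dl hd.
-
  case: ph => m [ej uq Hr].
  have rB : redc B = m := red_fwd uq Hr.
  have usz := rs_size_le uq.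
  have uqm : uniq (rs m) by move: uq; rewrite rsS rcons_uniq => /andP[].
  case: (c) cB e lc piv nf ac' gc => l cB e lc piv nf ac' gc.
  + rewrite sg_inl in e.
    have ljB : l != j by apply: contraTneq cB => ->; exact: (ac_nl ac).
    have lrs : l \notin rs m.
      by apply/negP => h; have := ac_one ac ljB lc; rewrite cB Hr h.
    have rl : rr m.+1 = l by rewrite e /rr /= -/(rr m) -ej.
    have um : uniq (rs m.+2).
      by rewrite rsS rcons_uniq uq andbT rsS mem_rcons in_cons negb_or rl -ej ljB.
    have Hr' l' : (inr l' \in inr j |: (B :\ inl l)) = (l' \in rs m.+1).
      by rewrite inB' eq_rr eq_rl /= Hr rsS mem_rcons in_cons -ej.
    have rB' := red_fwd um Hr'.
    have usz' := rs_size_le um.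
    split => //; last by rewrite /mu rB rB' /=; lia.
    by split => //; exists m.+1.
  + have : l \in rs m by rewrite -Hr.
    case/rsP => t tm lt.
    have tlj : tau l = tau j by [].
    pose D := [set d | d \in [seq rr s | s <- iota t.+1 (m - t)]].
    have DP d : reflect (exists2 s, (t < s <= m)%N & d = rr s) (d \in D).
      rewrite inE; apply: (iffP mapP) => [[s]|[s hs ->]].
        by rewrite mem_iota => hs ->; exists s => //; lia.
      by exists s => //; rewrite mem_iota; lia.
    have jl : j != l.
      apply/eqP => jl; have h := rr_inj uq (a := m) (b := t) (ltnSn m) (ltnW tm).
      by move: h; rewrite -ej -lt jl => /(_ erefl); lia.
    have memB' l' : (inr l' \in inr j |: (B :\ inr l)) = (l' != l) && (l' \in rs m.+1).
      rewrite inB' !eq_rr Hr rsS mem_rcons in_cons -ej.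
      by case: (eqVneq l' j) => [->|]; rewrite ?jl.
    have redE : [set l' | inr l' \in inr j |: (B :\ inr l)] = [set l' | l' \in rs m.+1] :\ l.
      by apply/setP => l'; move: (memB' l'); rewrite !inE => ->.
    have rB' : redc (inr j |: (B :\ inr l)) = m.
      have lS : l \in rs m.+1.
        by rewrite rsS mem_rcons in_cons; apply/orP; right; apply/rsP; exists t.
      rewrite /redc redE; have := card_rs uq.
      by rewrite (cardsD1 l) in_set lS add1n => -[].
    split => //; last by rewrite /mu rB rB' /=; lia.
    split => //; exists D; split.
    * by apply/set0Pn; exists j; apply/DP; exists m => //; rewrite tm leqnn.
    * apply/negP => /DP [s /andP[ts sm] e0].
      by have h := rr_inj uq (a := 0) (b := s) erefl sm e0; lia.
    * move=> d /DP [s /andP[ts sm] ->]; apply/andP; split.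
        rewrite inB' eq_rr.
        case: (eqVneq s m) => [->|sm']; first by rewrite -ej eqxx.
        have sm2 : (s < m)%N by lia.
        rewrite Hr eq_rr; apply/orP; right; apply/andP; split; last by apply/rsP; exists s.
        apply/eqP => e1; have h := rr_inj uq (a := s) (b := t) (ltnW sm2) (ltnW tm).
        by move: h; rewrite -lt e1 => /(_ erefl); lia.
      case: (eqVneq s m) => [->|sm'].
        by apply/DP; exists t.+1; [lia | rewrite /= -/(rr t) -lt tlj ej].
      by apply/DP; exists s.+1; [lia | by []].
Qed.


Lemma main_ind k : forall (B : {set lhcol n}) g, Inv B g -> (mu B g <= k)%N ->
  exists s, [/\ lh_from goodc g B s, (size s <= (mu B g).+1)%N & Fin (last B s)].
Proof.
elim: k => [|k IH] B g inv hmu.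
  have [x xD [piv [fin|[nf inv' hlt]]]] := step inv.
    by exists [:: g |: (B :\ x)]; split => //; split => //; case: fin.
  by move: hlt hmu; lia.
have [x xD [piv [fin|[nf inv' hlt]]]] := step inv.
  by exists [:: g |: (B :\ x)]; split => //; split => //; case: fin.
have hk : (mu (g |: (B :\ x)) (twin x) <= k)%N by lia.
have [s' [hs' sz' fin']] := IH _ _ inv' hk.
exists (g |: (B :\ x) :: s'); split => //=; last by lia.
split => //; case: s' hs' sz' fin' => // B'' s'' hs' _ _.
by split => //; exists x.
Qed.

Lemma blue_good : goodc (blue_basis n).
Proof.
have E : blue_basis n = inl @: setT.
  apply/setP => -[j|j]; rewrite inE /=; first by rewrite imset_f ?in_setT.
  by apply/esym/imsetP => -[k _].
split; first by rewrite E card_imset ?cardsT ?card_ord //; move=> a b [].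
by move=> [a|a] [b|b]; rewrite !inE //= !sg_inl => _ _ ->.
Qed.

Lemma initial : exists s, [/\ lh_from goodc (inr j0) (blue_basis n) s,
  (size s <= 2 * n - 1)%N & Fin (last (blue_basis n) s)].
Proof.
have gB : inr j0 \notin blue_basis n by rewrite inE.
have cB : inl (tau j0) \in blue_basis n by rewrite inE.
have e : sg (inl (tau j0)) = sg (inr j0) by rewrite sg_inl.
have piv := pivot_good blue_good gB cB e.
have n0 : (0 < n)%N by case: (j0) => /= k; lia.
set B1 := inr j0 |: (blue_basis n :\ inl (tau j0)).
have memB1l l : (inl l \in B1) = (l != tau j0) by rewrite inB' eq_lr eq_ll /blue_basis in_set andbT.
have memB1r l : (inr l \in B1) = (l == j0).
  by rewrite inB' eq_rr eq_rl /blue_basis in_set /= orbF.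
case: (eqVneq (tau j0) j0) => tj.
  have fl : fully_labeled B1.
    by move=> i; apply/lab_mem; rewrite memB1l memB1r tj; case: (i == j0).
  exists [:: B1]; split => //=; first by lia.
  split => //; [by case: piv | by exists j0; rewrite memB1r].
have ac : AC B1 (inr (tau j0)).
  constructor => //=.
  - by case: piv.
  - by rewrite memB1l eqxx.
  - by rewrite memB1r.
  - by rewrite memB1l eq_sym.
  - by rewrite memB1r.
  by move=> l h1 h2; rewrite memB1l memB1r h1 (negbTE h2).
have uq2 : uniq (rs 2) by rewrite /= andbT inE eq_sym.
have Hr l : (inr l \in B1) = (l \in rs 1) by rewrite memB1r /= inE.
have inv : Inv B1 (inr (tau j0)) by split => //; exists 1%N.
have rB := red_fwd uq2 Hr.
have usz := rs_size_le uq2.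
have [s' [hs' sz' fin']] := main_ind inv (leqnn _).
exists (B1 :: s'); split => //=; last by move: sz'; rewrite /mu rB; lia.
split => //; case: s' hs' sz' fin' => // B'' s'' hs' _ _.
split.
  move=> /(_ (tau j0)) /lab_mem; rewrite memB1l memB1r eqxx /=.
  by rewrite (negbTE tj).
exists (inl (tau j0)) => //.
by rewrite in_setD cB andbT memB1l eqxx.
Qed.

End Comb.

Lemma pivot_equiv n (P Q : {set lhcol n} -> Prop) : (forall B, P B <-> Q B) ->
  forall B g B', pivot P B g B' <-> pivot Q B g B'.
Proof.
move=> h B g B'; rewrite /pivot; split => -[hb [hs [hne hu]]].
  split; first by apply/h.
  by split => //; split => // B'' /h hB''; apply: hu.
split; first by apply/h.
by split => //; split => // B'' /h hB''; apply: hu.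
Qed.

Lemma lh_from_equiv n (P Q : {set lhcol n} -> Prop) : (forall B, P B <-> Q B) ->
  forall s g B, lh_from P g B s <-> lh_from Q g B s.
Proof.
move=> h; elim => [//|B' s IH] g B /=.
case: s IH => [|B'' s'] IH.
  by split => -[hp fl]; split => //; apply/(pivot_equiv h).
split => -[hp [nf [l hl hr]]]; split; try by apply/(pivot_equiv h).
  by split => //; exists l => //; apply/IH.
by split => //; exists l => //; apply/IH.
Qed.

Theorem theorem5p6 (R : realType) (n : nat) (M : 'M[R]_n) (q : 'I_n -> R)
    (jstar : 'I_n) :
  necp_instance M q -> dominance M q ->
  (forall s : seq {set lhcol n},
     lh_path (classical_basis M q) jstar s <-> lh_path (tropical_basis M q) jstar s) /\
  exists s : seq {set lhcol n},
    [/\ lh_path (classical_basis M q) jstar s,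
        (size s <= 2 * n - 1)%N &
        exists x : lhcol n -> R,
          [/\ supported (last (blue_basis n) s) x,
              (forall c, 0 <= x c),
              (forall i, x (inl i) = \sum_(j < n) M i j * x (inr j) + q i),
              \sum_(i < n) x (inl i) * x (inr i) = 0 &
              exists j, x (inr j) != 0]].
Proof.
move=> HN HD.
have eqv B : classical_basis M q B <-> tropical_basis M q B.
  split => h.
    by apply/(trop_good HN HD); apply/(class_iff HN HD).
  by apply/(class_iff HN HD); apply/(trop_good HN HD).
split; first by move=> s; apply: lh_from_equiv.
have sg_inl : forall j, sig M q (inl j) = j by [].
have [s [hs sz [fl gf [l lB]]]] := initial sg_inl jstar.
have cl : forall B, classical_basis M q B <-> goodc (sig M q) B.
  by move=> B; apply: (class_iff HN HD).
exists s; split => //; first by apply/(lh_from_equiv cl).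
set Bf := last (blue_basis n) s in fl gf lB *.
have [_ [_ [x [sx [x0 Ax]]]]] := (proj2 (cl Bf) gf).
have xeq i : x (inl i) = \sum_(j < n) M i j * x (inr j) + q i.
  have := Ax i; rewrite /Aapply big_sumType /=.
  rewrite (bigD1 i) //= eqxx mul1r big1 => [|j /negbTE]; last first.
    by rewrite eq_sym => ->; rewrite mul0r.
  rewrite addr0 => <-.
  have -> : \sum_(j < n) - M i j * x (inr j) = - \sum_(j < n) M i j * x (inr j).
    by rewrite -sumrN; apply: eq_bigr => j _; rewrite mulNr.
  by rewrite addrCA subrr addr0.
exists x; split => //.
  apply: big1 => i _.
  have linj : {in Bf &, injective (@label n)}.
    apply/imset_injP; rewrite (_ : (@label n) @: Bf = setT).
      by rewrite cardsT card_ord; case: gf => ->.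
    apply/eqP; rewrite eqEsubset subsetT /=; apply/subsetP => i' _.
    by have [e eB <-] := fl i'; apply: imset_f.
  case: (boolP (inl i \in Bf)) => hl; last by rewrite (sx _ hl) mul0r.
  case: (boolP (inr i \in Bf)) => hr; last by rewrite (sx _ hr) mulr0.
  by have := linj _ _ hl hr erefl.
case: (boolP [exists j, x (inr j) != 0]) => [/existsP//|/existsPn hz].
exfalso.
have blueB : blue_basis n \subset Bf.
  apply/subsetP => -[i|i]; rewrite inE // => _.
  apply/negPn/negP => /sx h.
  move: (xeq i); rewrite h big1 ?add0r => [|j _]; last by rewrite (eqP (negPn (hz j))) mulr0.
  by move=> e; move: (q_gt0 HN i); rewrite -e ltxx.
have : blue_basis n = Bf.
  apply/eqP; rewrite eqEcard blueB /=.
  by case: gf => ->; case: (blue_good sg_inl) => ->.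
by move=> e; move: lB; rewrite -e inE.
Qed.
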